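(* For all integers $v\geq 1$ and $r\geq 1$, $$\sum_{i=1}^{2v-2}2^{i-1}\binom{2r+i-1}{i}\sigma(2v-i,2r+i)+2^{2v-1}\sum_{j=0}^{2r-2}(-1)^j\binom{2v+j-1}{j}\lambda(2v+j)\lambda(2r-j)$$ $$-2^{2v-3}\binom{2v+2r-2}{2v-1}(2v+2r-1)\lambda(2v+2r)+2^{2v-2}\binom{2v+2r-2}{2v-1}\sum_{j=1}^{r+v-2}\lambda(2j+1)\lambda(2r+2v-2j-1)=0,$$ where an empty sum equals $0$.
   Context: For integers $t\geq 1$, $n\geq 1$ let $S_n^{(t)}=\sum_{k=1}^{n}\frac{1}{(2k-1)^t}$, and for integers $s\geq 2$, $t\geq 1$ let $\sigma(s,t)=\sum_{n\geq 1}\frac{S_n^{(t)}}{n^s}$. For real $s>1$, $\lambda(s)=\sum_{n\geq 1}\frac{1}{(2n-1)^s}$. *)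

(* Defs.v *)
From Stdlib Require Import Reals.
From Coquelicot Require Import Coquelicot.
Open Scope R_scope.

Definition S_odd (t n : nat) : R :=
  sum_n_m (fun k : nat => / (INR (2 * k - 1)) ^ t) 1 n.

Definition sigma_st (s t : nat) : R :=
  Series (fun m : nat => S_odd t (S m) / (INR (S m)) ^ s).

Definition lambda_d (s : nat) : R :=
  Series (fun m : nat => / (INR (2 * m + 1)) ^ s).

(* real binomial coefficient n choose k (Stdlib Reals.Binomial.C; Coquelicot's C is the complex type) *)
Definition binom (n k : nat) : R := Stdlib.Reals.Binomial.C n k.

(* Main.v *)
Require Import Defs.
From Stdlib Require Import Reals ZArith Lia Lra.
From Coquelicot Require Import Coquelicot.
Open Scope R_scope.


Fixpoint fs (f : nat -> R) (n : nat) : R :=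
  match n with O => 0 | S n => fs f n + f n end.

Lemma fs_ext f g n : (forall k, (k < n)%nat -> f k = g k) -> fs f n = fs g n.
Proof.
  induction n; intros H; simpl; auto.
  rewrite IHn by (intros; apply H; lia). rewrite H by lia. auto.
Qed.

Lemma fs_plus f g n : fs (fun k => f k + g k) n = fs f n + fs g n.
Proof. induction n; simpl; [lra|rewrite IHn; lra]. Qed.

Lemma fs_minus f g n : fs (fun k => f k - g k) n = fs f n - fs g n.
Proof. induction n; simpl; [lra|rewrite IHn; lra]. Qed.

Lemma fs_scal c f n : fs (fun k => c * f k) n = c * fs f n.
Proof. induction n; simpl; [lra|rewrite IHn; lra]. Qed.

Lemma fs_zero n : fs (fun _ => 0) n = 0.
Proof. induction n; simpl; [lra|rewrite IHn; lra]. Qed.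

Lemma fs_le f g n : (forall k, (k < n)%nat -> f k <= g k) -> fs f n <= fs g n.
Proof.
  induction n; intros H; simpl; [lra|].
  assert (fs f n <= fs g n) by (apply IHn; intros; apply H; lia).
  assert (f n <= g n) by (apply H; lia). lra.
Qed.

Lemma fs_nonneg f n : (forall k, 0 <= f k) -> 0 <= fs f n.
Proof. intros H; induction n; simpl; [lra|specialize (H n); lra]. Qed.

Lemma fs_mono f n m : (forall k, 0 <= f k) -> (n <= m)%nat -> fs f n <= fs f m.
Proof.
  intros H Hnm; induction Hnm; [lra|simpl; specialize (H m); lra].
Qed.

Lemma fs_split f n m : fs f (n + m) = fs f n + fs (fun k => f (n + k)%nat) m.
Proof. induction m; simpl; [rewrite Nat.add_0_r; lra|rewrite Nat.add_succ_r; simpl; rewrite IHm; lra]. Qed.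

Lemma fs_shift f n : fs f (S n) = f O + fs (fun k => f (S k)) n.
Proof. induction n; simpl in *; [lra|rewrite IHn; lra]. Qed.

Lemma fs_swap (f : nat -> nat -> R) n m :
  fs (fun k => fs (fun l => f k l) m) n = fs (fun l => fs (fun k => f k l) n) m.
Proof.
  induction n; simpl.
  - rewrite fs_zero; auto.
  - rewrite IHn, <- fs_plus; auto.
Qed.

Lemma fs_mult f g n m : fs f n * fs g m = fs (fun k => fs (fun l => f k * g l) m) n.
Proof.
  induction n; simpl; [lra|].
  rewrite <- IHn, fs_scal. lra.
Qed.

Lemma fs_fs_plus (f g : nat -> nat -> R) n m :
  fs (fun k => fs (fun l => f k l + g k l) m) n =
  fs (fun k => fs (fun l => f k l) m) n + fs (fun k => fs (fun l => g k l) m) n.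
Proof. rewrite <- fs_plus. apply fs_ext; intros; apply fs_plus. Qed.

Lemma fs_fs_scal c (f : nat -> nat -> R) n m :
  fs (fun k => fs (fun l => c * f k l) m) n = c * fs (fun k => fs (fun l => f k l) m) n.
Proof. rewrite <- fs_scal. apply fs_ext; intros; apply fs_scal. Qed.

Lemma fs_fs_fs (F : nat -> nat -> nat -> R) J n m :
  fs (fun k => fs (fun l => fs (fun j => F j k l) J) m) n =
  fs (fun j => fs (fun k => fs (fun l => F j k l) m) n) J.
Proof.
  induction J as [|J IHJ].
  - simpl. transitivity (fs (fun _ => 0) n); [|apply fs_zero]. apply fs_ext; intros. apply fs_zero.
  - simpl. rewrite <- IHJ. rewrite <- fs_fs_plus. auto.
Qed.

Lemma sum_n_m_fs (a : nat -> R) lo hi :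
  sum_n_m a lo hi = fs (fun k => a (lo + k)%nat) (S hi - lo).
Proof.
  destruct (le_lt_dec lo hi) as [H|H].
  - induction H as [|m H IHle].
    + rewrite sum_n_n, Nat.sub_succ_l, Nat.sub_diag by lia. simpl. rewrite Nat.add_0_r. 
      unfold plus, zero; simpl; lra.
    + rewrite sum_n_Sm by lia. rewrite IHle.
      replace (S (S m) - lo)%nat with (S (S m - lo)) by lia.
      change (fs (fun k => a (lo + k)%nat) (S (S m - lo))) with
        (fs (fun k => a (lo + k)%nat) (S m - lo) + a (lo + (S m - lo))%nat).
      replace (lo + (S m - lo))%nat with (S m) by lia. auto.
  - rewrite (sum_n_m_zero a) by lia. replace (S hi - lo)%nat with O by lia. auto.
Qed.

Lemma sum_n_fs (a : nat -> R) n : sum_n a n = fs a (S n).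
Proof. unfold sum_n. rewrite sum_n_m_fs. rewrite Nat.sub_0_r. apply fs_ext; auto. Qed.

Lemma lim_fs (F : nat -> nat -> R) (L : nat -> R) n :
  (forall k, (k < n)%nat -> is_lim_seq (fun M => F k M) (L k)) ->
  is_lim_seq (fun M => fs (fun k => F k M) n) (fs L n).
Proof.
  induction n; intros H; simpl.
  - apply is_lim_seq_const.
  - apply (is_lim_seq_plus' _ _ (fs L n) (L n)).
    + apply IHn; intros; apply H; lia.
    + apply H; lia.
Qed.

Lemma series_of_lim (a : nat -> R) (l : R) :
  is_lim_seq (fun n => fs a n) l -> Series a = l.
Proof.
  intros H. unfold Series.
  rewrite (is_lim_seq_unique _ l); auto.
  apply is_lim_seq_ext with (fun n => fs a (S n)).
  - intros; rewrite sum_n_fs; auto.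
  - apply (is_lim_seq_incr_1 (fun n => fs a n)); auto.
Qed.

Lemma incr_bounded_lim (u : nat -> R) B :
  (forall n, u n <= u (S n)) -> (forall n, u n <= B) -> exists l : R, is_lim_seq u l.
Proof. intros H1 H2. apply (ex_finite_lim_seq_incr u B); auto. Qed.

Fixpoint bn (n k : nat) : nat :=
  match n, k with
  | _, O => 1%nat
  | O, S _ => O
  | S n', S k' => (bn n' k' + bn n' (S k'))%nat
  end.

Lemma bn_0 n : bn n 0 = 1%nat.
Proof. destruct n; auto. Qed.

Lemma bn_big n k : (n < k)%nat -> bn n k = O.
Proof.
  revert k; induction n; intros k H; destruct k; simpl; try lia; auto.
  rewrite !IHn by lia. auto.
Qed.

Lemma bn_diag n : bn n n = 1%nat.
Proof. induction n; auto. simpl. rewrite IHn, bn_big by lia. auto. Qed.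

Lemma bn_SS n k : bn (S n) (S k) = (bn n k + bn n (S k))%nat.
Proof. auto. Qed.

Lemma bn_sym a b : bn (a + b) a = bn (a + b) b.
Proof.
  revert b; induction a; intros b.
  - simpl. rewrite bn_0, bn_diag. auto.
  - induction b.
    + rewrite Nat.add_0_r, bn_diag, bn_0. auto.
    + replace (S a + S b)%nat with (S (a + S b)) by lia.
      rewrite !bn_SS.
      assert (E1 : bn (a + S b) a = bn (a + S b) (S b)) by apply IHa.
      assert (E2 : bn (a + S b) (S a) = bn (a + S b) b).
      { replace (a + S b)%nat with (S a + b)%nat by lia. exact IHb. }
      lia.
Qed.

Lemma C_bn n k : (k <= n)%nat -> Binomial.C n k = INR (bn n k).
Proof.
  revert k; induction n; intros k H.
  - destruct k; [|lia]. rewrite C_n_0. simpl; auto.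
  - destruct k. { rewrite C_n_0, bn_0; simpl; auto. }
    rewrite bn_SS, plus_INR.
    destruct (Nat.eq_dec k n) as [->|Hk].
    + rewrite C_n_n, bn_diag, (bn_big n (S n)) by lia. simpl; lra.
    + rewrite <- pascal by lia. rewrite !IHn by lia. auto.
Qed.


Lemma geom s n : (1 - s) * fs (fun i => s ^ i) n = 1 - s ^ n.
Proof. induction n; simpl; [lra|]. rewrite Rmult_plus_distr_l, IHn. ring. Qed.

Lemma bn_aux p n : bn (S p + n) n = (bn (n + p) (S p) + bn (p + n) n)%nat.
Proof.
  destruct n.
  - rewrite Nat.add_0_r, Nat.add_0_l, !bn_0, bn_big by lia. auto.
  - replace (S p + S n)%nat with (S (p + S n)) by lia. rewrite bn_SS.
    replace (S n + p)%nat with (S p + n)%nat by lia.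
    rewrite bn_sym. replace (p + S n)%nat with (S p + n)%nat by lia. lia.
Qed.

Lemma fs_S f n : fs f (S n) = fs f n + f n.
Proof. reflexivity. Qed.

Lemma phi_step s t p : s + t = 1 -> forall n,
  s ^ n * INR (bn (n + p) (S p)) + t * fs (fun i => INR (bn (S p + i) i) * s ^ i) n
  - fs (fun i => INR (bn (p + i) i) * s ^ i) n = 0.
Proof.
  intros Hst n. induction n.
  - simpl. rewrite bn_big by lia. simpl. lra.
  - rewrite !fs_S.
    assert (E : INR (bn (S p + n) n) = INR (bn (n + p) (S p)) + INR (bn (p + n) n)).
    { rewrite bn_aux, plus_INR. auto. }
    replace (S n + p)%nat with (S p + n)%nat by lia.
    rewrite (bn_sym (S p) n).
    set (F1 := fs (fun i => INR (bn (S p + i) i) * s ^ i) n) in *.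
    set (F0 := fs (fun i => INR (bn (p + i) i) * s ^ i) n) in *.
    rewrite E. rewrite <- IHn. replace t with (1 - s) by lra. simpl pow. ring.
Qed.

Lemma phi s t p q : s + t = 1 ->
  s ^ (S q) * fs (fun j => INR (bn (q + j) j) * t ^ j) (S p)
  + t ^ (S p) * fs (fun i => INR (bn (p + i) i) * s ^ i) (S q) = 1.
Proof.
  intros Hst. induction p.
  - simpl fs at 1. rewrite Nat.add_0_r, bn_0. 
    replace (fs (fun i => INR (bn (0 + i) i) * s ^ i) (S q)) with (fs (fun i => s ^ i) (S q)).
    2:{ apply fs_ext; intros. rewrite Nat.add_0_l, bn_diag. simpl; lra. }
    replace t with (1 - s) by lra. rewrite pow_1, geom. simpl. lra.
  - pose proof (phi_step s t p Hst (S q)) as G.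
    change (fs (fun j => INR (bn (q + j) j) * t ^ j) (S (S p))) with
      (fs (fun j => INR (bn (q + j) j) * t ^ j) (S p) + INR (bn (q + S p) (S p)) * t ^ (S p)).
    replace (q + S p)%nat with (S q + p)%nat by lia.
    replace (t ^ S (S p)) with (t * t ^ S p) by (simpl; ring).
    rewrite <- IHp. 
    assert (H3 : t ^ S p * (s ^ S q * INR (bn (S q + p) (S p)) +
       t * fs (fun i : nat => INR (bn (S p + i) i) * s ^ i) (S q) -
       fs (fun i : nat => INR (bn (p + i) i) * s ^ i) (S q)) = 0) by (rewrite G; ring).
    nra.
Qed.

Lemma pow_div_distr a b n : b <> 0 -> (a / b) ^ n = a ^ n / b ^ n.
Proof. intros Hb. unfold Rdiv. rewrite Rpow_mult_distr, pow_inv. auto. Qed.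

Lemma pf_t1 x y z c P Q j : 0 < x -> 0 < y -> 0 < z -> (j <= P)%nat ->
  / x ^ P * / z ^ Q * ((z / y) ^ Q * (c * (- x / y) ^ j)) =
  (-1) ^ j * c * / x ^ (P - j) * / y ^ (Q + j).
Proof.
  intros Hx Hy Hz Hj.
  rewrite !pow_div_distr by lra.
  replace (- x) with (-1 * x) by ring. rewrite Rpow_mult_distr.
  replace (x ^ P) with (x ^ (P - j) * x ^ j) by (rewrite <- pow_add; f_equal; lia).
  rewrite pow_add.
  assert (x ^ (P - j) <> 0) by (apply pow_nonzero; lra).
  assert (x ^ j <> 0) by (apply pow_nonzero; lra).
  assert (y ^ Q <> 0) by (apply pow_nonzero; lra).
  assert (y ^ j <> 0) by (apply pow_nonzero; lra).
  assert (z ^ Q <> 0) by (apply pow_nonzero; lra).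
  field; auto.
Qed.

Lemma pf_t2 x y z c P Q i : 0 < x -> 0 < y -> 0 < z -> (i <= Q)%nat ->
  / x ^ P * / z ^ Q * ((- x / y) ^ P * (c * (z / y) ^ i)) =
  (-1) ^ P * c * / z ^ (Q - i) * / y ^ (P + i).
Proof.
  intros Hx Hy Hz Hj.
  rewrite !pow_div_distr by lra.
  replace (- x) with (-1 * x) by ring. rewrite Rpow_mult_distr.
  replace (z ^ Q) with (z ^ (Q - i) * z ^ i) by (rewrite <- pow_add; f_equal; lia).
  rewrite pow_add.
  assert (z ^ (Q - i) <> 0) by (apply pow_nonzero; lra).
  assert (x ^ P <> 0) by (apply pow_nonzero; lra).
  assert (y ^ P <> 0) by (apply pow_nonzero; lra).
  assert (y ^ i <> 0) by (apply pow_nonzero; lra).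
  assert (z ^ i <> 0) by (apply pow_nonzero; lra).
  field; auto.
Qed.

Lemma pf x y p q : 0 < x -> 0 < y ->
  / x ^ (S p) * / (x + y) ^ (S q) =
  fs (fun j => (-1) ^ j * INR (bn (q + j) j) * / x ^ (S p - j) * / y ^ (S q + j)) (S p)
  + (-1) ^ (S p) * fs (fun i => INR (bn (p + i) i) * / (x + y) ^ (S q - i) * / y ^ (S p + i)) (S q).
Proof.
  intros Hx Hy.
  pose proof (phi ((x + y) / y) (- x / y) p q) as H.
  assert (Hst : (x + y) / y + - x / y = 1) by (field; lra).
  specialize (H Hst).
  rewrite <- (Rmult_1_r (/ x ^ S p * / (x + y) ^ S q)). rewrite <- H.
  rewrite Rmult_plus_distr_l.
  f_equal.
  - rewrite <- Rmult_assoc, <- fs_scal. apply fs_ext; intros j Hj.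
    rewrite Rmult_assoc.
    rewrite pf_t1 by lia || lra. auto.
  - rewrite <- Rmult_assoc, <- !fs_scal. apply fs_ext; intros i Hi.
    rewrite Rmult_assoc.
    rewrite (pf_t2 x y (x + y)) by lia || lra. ring.
Qed.


Definition ok (k : nat) : R := 2 * INR k + 1.

Lemma ok_ge1 k : 1 <= ok k.
Proof. unfold ok. pose proof (pos_INR k). lra. Qed.
Lemma ok_pos k : 0 < ok k.
Proof. pose proof (ok_ge1 k). lra. Qed.

Lemma INR_odd m : INR (2 * m + 1) = ok m.
Proof. unfold ok. rewrite plus_INR, mult_INR. simpl. lra. Qed.

Lemma inv_pow_le a b n : 0 < a -> a <= b -> / b ^ n <= / a ^ n.
Proof. intros. apply Rinv_le_contravar. apply pow_lt; lra. apply pow_incr; lra. Qed.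

Lemma inv_pow_pos a n : 0 < a -> 0 < / a ^ n.
Proof. intros. apply Rinv_0_lt_compat, pow_lt; lra. Qed.

Lemma inv_ok_le k s t : (s <= t)%nat -> / ok k ^ t <= / ok k ^ s.
Proof.
  intros H. apply Rinv_le_contravar. apply pow_lt, ok_pos. apply Rle_pow; auto. apply ok_ge1.
Qed.

Definition Lam (M s : nat) : R := fs (fun k => / ok k ^ s) M.

Lemma Lam_nonneg M s : 0 <= Lam M s.
Proof. apply fs_nonneg. intros; left; apply inv_pow_pos, ok_pos. Qed.

Lemma Lam2_bound M : Lam M 2 <= 2 - 2 / (INR M + 1).
Proof.
  induction M.
  - unfold Lam; simpl. lra.
  - unfold Lam in *. rewrite fs_S. rewrite S_INR.
    pose proof (pos_INR M).
    assert (/ ok M ^ 2 <= 2 / (INR M + 1) - 2 / (INR M + 1 + 1)).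
    { replace (2 / (INR M + 1) - 2 / (INR M + 1 + 1)) with (/ ((INR M + 1) * (INR M + 2) / 2))
        by (field; lra).
      apply Rinv_le_contravar. apply Rdiv_lt_0_compat; [apply Rmult_lt_0_compat|]; lra.
      unfold ok. simpl. nra. }
    lra.
Qed.

Lemma Lam_le2 M s : (2 <= s)%nat -> Lam M s <= 2.
Proof.
  intros H. apply Rle_trans with (Lam M 2).
  - apply fs_le; intros; apply inv_ok_le; auto.
  - pose proof (Lam2_bound M). pose proof (pos_INR M).
    assert (0 < 2 / (INR M + 1)) by (apply Rdiv_lt_0_compat; lra). lra.
Qed.

Lemma lam_lim s : (2 <= s)%nat -> is_lim_seq (fun M => Lam M s) (lambda_d s).
Proof.
  intros Hs.
  destruct (incr_bounded_lim (fun M => Lam M s) 2) as [l Hl].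
  - intros n. unfold Lam. rewrite fs_S. pose proof (inv_pow_pos (ok n) s (ok_pos n)). lra.
  - intros n. apply Lam_le2; auto.
  - replace (lambda_d s) with l; auto. symmetry. unfold lambda_d.
    apply series_of_lim. eapply is_lim_seq_ext; [|apply Hl].
    intros n. unfold Lam. apply fs_ext. intros. rewrite INR_odd. auto.
Qed.

Definition g (t s k l : nat) : R := / ok k ^ t * / (ok k + ok l) ^ s.

Lemma g_pos t s k l : 0 < g t s k l.
Proof.
  unfold g. apply Rmult_lt_0_compat; apply inv_pow_pos.
  apply ok_pos. pose proof (ok_pos k); pose proof (ok_pos l); lra.
Qed.

Definition Qs (M t s : nat) : R := fs (fun k => fs (fun l => g t s k l) M) M.
Definition Tr (M t s : nat) : R := fs (fun k => fs (fun l => g t s k l) (M - k)) M.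

Lemma diag (f : nat -> nat -> R) M :
  fs (fun k => fs (f k) (M - k)) M = fs (fun n => fs (fun k => f k (n - k)%nat) (S n)) M.
Proof.
  induction M.
  - auto.
  - rewrite (fs_S (fun n => fs (fun k => f k (n - k)%nat) (S n)) M).
    rewrite <- IHM.
    rewrite (fs_S (fun k => fs (f k) (S M - k)) M).
    rewrite (fs_S (fun k => f k (M - k)%nat) M).
    rewrite Nat.sub_diag.
    replace (S M - M)%nat with 1%nat by lia.
    replace (fs (fun k => fs (f k) (S M - k)) M) with
      (fs (fun k => fs (f k) (M - k) + f k (M - k)%nat) M).
    + rewrite fs_plus. simpl. lra.
    + apply fs_ext; intros k Hk. rewrite Nat.sub_succ_l by lia. auto.
Qed.

Lemma Tr_diag M t s : Tr M t s = fs (fun n => fs (fun k => g t s k (n - k)%nat) (S n)) M.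
Proof. unfold Tr. apply (diag (fun k l => g t s k l)). Qed.

Lemma Tr_mono M t s : Tr M t s <= Tr (S M) t s.
Proof.
  rewrite !Tr_diag. apply fs_mono; auto. intros; apply fs_nonneg; intros; left; apply g_pos.
Qed.

Lemma Tr_le_Q M t s : Tr M t s <= Qs M t s.
Proof.
  unfold Tr, Qs. apply fs_le; intros k Hk. apply fs_mono; [intros; left; apply g_pos|lia].
Qed.

Lemma Q_le_Tr M t s : Qs M t s <= Tr (2 * M) t s.
Proof.
  unfold Tr, Qs. apply Rle_trans with (fs (fun k => fs (fun l => g t s k l) (2 * M - k)) M).
  - apply fs_le; intros k Hk. apply fs_mono; [intros; left; apply g_pos|lia].
  - apply fs_mono; [|lia]. intros; apply fs_nonneg; intros; left; apply g_pos.
Qed.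

Lemma Q_le_Lam M t s : Qs M t s <= Lam M t * Lam M s.
Proof.
  unfold Qs, Lam. rewrite fs_mult. apply fs_le; intros k _. apply fs_le; intros l _.
  unfold g. apply Rmult_le_compat_l. left; apply inv_pow_pos, ok_pos.
  apply inv_pow_le. apply ok_pos. pose proof (ok_pos k); lra.
Qed.

Lemma S_odd_fs t m : S_odd t (S m) = fs (fun k => / ok k ^ t) (S m).
Proof.
  unfold S_odd. rewrite sum_n_m_fs. replace (S (S m) - 1)%nat with (S m) by lia.
  apply fs_ext; intros k _. f_equal. f_equal. rewrite <- INR_odd. f_equal. lia.
Qed.

Lemma sig_term t s m :
  S_odd t (S m) / INR (S m) ^ s = 2 ^ s * fs (fun k => g t s k (m - k)%nat) (S m).
Proof.
  rewrite S_odd_fs. unfold Rdiv. rewrite Rmult_comm, <- fs_scal, <- fs_scal.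
  apply fs_ext; intros k Hk. unfold g.
  replace (ok k + ok (m - k)) with (2 * INR (S m)).
  2:{ unfold ok. rewrite minus_INR by lia. rewrite S_INR. ring. }
  rewrite Rpow_mult_distr.
  assert (2 ^ s <> 0) by (apply pow_nonzero; lra).
  assert (INR (S m) ^ s <> 0) by (apply pow_nonzero; rewrite S_INR; pose proof (pos_INR m); lra).
  assert (ok k ^ t <> 0) by (apply pow_nonzero; pose proof (ok_pos k); lra).
  field; auto.
Qed.

Lemma sig_lim t s : (2 <= t)%nat -> (2 <= s)%nat ->
  is_lim_seq (fun M => Qs M t s) (sigma_st s t / 2 ^ s).
Proof.
  intros Ht Hs.
  destruct (incr_bounded_lim (fun M => Tr M t s) 4) as [l Hl].
  - intros; apply Tr_mono.
  - intros n. eapply Rle_trans; [apply Tr_le_Q|]. eapply Rle_trans; [apply Q_le_Lam|].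
    pose proof (Lam_le2 n t Ht); pose proof (Lam_le2 n s Hs).
    pose proof (Lam_nonneg n t); pose proof (Lam_nonneg n s). nra.
  - assert (E : sigma_st s t = 2 ^ s * l).
    { unfold sigma_st. apply series_of_lim.
      eapply is_lim_seq_ext; [|apply (is_lim_seq_scal_l _ (2 ^ s) l Hl)].
      intros n. simpl. rewrite Tr_diag, <- fs_scal. apply fs_ext; intros. rewrite sig_term. auto. }
    replace (sigma_st s t / 2 ^ s) with l.
    2:{ rewrite E. field. apply pow_nonzero; lra. }
    apply is_lim_seq_le_le with (fun M => Tr M t s) (fun M => Tr (2 * M) t s).
    + intros; split; [apply Tr_le_Q|apply Q_le_Tr].
    + auto.
    + apply (is_lim_seq_subseq (fun M => Tr M t s) l (fun n => 2 * n)%nat); auto.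
      apply eventually_subseq. intros; lia.
Qed.


Lemma pf2 x y a b : 0 < x -> 0 < y ->
  let p := S (2 * a) in let q := S (2 * b) in
  / x ^ (S p) * / (x + y) ^ (S q) =
  fs (fun j => (-1) ^ j * INR (bn (q + j) j) * / x ^ (S p - j) * / y ^ (S q + j)) p
  + fs (fun i => INR (bn (p + i) i) * / (x + y) ^ (S q - i) * / y ^ (S p + i)) q
  - INR (bn (p + q) q) * (/ x * / (x + y) * / y ^ (p + q)).
Proof.
  intros Hx Hy p q.
  rewrite (pf x y p q Hx Hy).
  rewrite !fs_S.
  assert (Hp1 : (-1) ^ p = -1) by (unfold p; apply pow_1_odd).
  assert (Hp2 : (-1) ^ (S p) = 1) by (replace (S p) with (2 * S a)%nat by (unfold p; lia); apply pow_1_even).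
  rewrite Hp1, Hp2.
  replace (S p - p)%nat with 1%nat by lia.
  replace (S p + q)%nat with (S (p + q)) by lia.
  replace (S q + p)%nat with (S (p + q)) by lia.
  replace (S q - q)%nat with 1%nat by lia.
  replace (q + p)%nat with (p + q)%nat by lia.
  rewrite (bn_sym p q).
  assert (y ^ (p + q) <> 0) by (apply pow_nonzero; lra).
  change (y ^ S (p + q)) with (y * y ^ (p + q)).
  rewrite !pow_1.
  set (F1 := fs _ p). set (F2 := fs _ q).
  field. repeat split; lra.
Qed.

Lemma dsym x y c : 0 < x -> 0 < y ->
  let N := S (2 * c) in
  / x * / (x + y) * / y ^ (S N) + / y * / (x + y) * / x ^ (S N) =
  fs (fun j => (-1) ^ j * / x ^ (j + 2) * / y ^ (S N - j)) N.
Proof.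
  intros Hx Hy N.
  transitivity (/ x ^ 2 * / y ^ (S N) * fs (fun j => (- y / x) ^ j) N).
  2:{ rewrite <- fs_scal. apply fs_ext; intros j Hj.
      rewrite pow_div_distr by lra. replace (- y) with (-1 * y) by ring.
      rewrite Rpow_mult_distr.
      replace (y ^ (S N)) with (y ^ (S N - j) * y ^ j) by (rewrite <- pow_add; f_equal; lia).
      rewrite pow_add.
      assert (y ^ (S N - j) <> 0) by (apply pow_nonzero; lra).
      assert (y ^ j <> 0) by (apply pow_nonzero; lra).
      assert (x ^ j <> 0) by (apply pow_nonzero; lra).
      field; repeat split; auto; lra. }
  assert (Hg := geom (- y / x) N).
  assert (E : fs (fun j => (- y / x) ^ j) N = (1 - (- y / x) ^ N) * (x / (x + y))).
  { rewrite <- Hg. field. lra. }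
  rewrite E. rewrite pow_div_distr by lra.
  replace (- y) with (-1 * y) by ring. rewrite Rpow_mult_distr.
  assert (HN : (-1) ^ N = -1) by (unfold N; apply pow_1_odd). rewrite HN.
  assert (x ^ N <> 0) by (apply pow_nonzero; lra).
  assert (y ^ N <> 0) by (apply pow_nonzero; lra).
  change (y ^ S N) with (y * y ^ N). change (x ^ S N) with (x * x ^ N).
  change (x ^ 2) with (x * (x * 1)).
  field. repeat split; lra.
Qed.

Definition DD (M : nat) (f : nat -> nat -> R) : R := fs (fun k => fs (fun l => f k l) M) M.

Lemma DD_ext M f h : (forall k l, f k l = h k l) -> DD M f = DD M h.
Proof. intros H. unfold DD. apply fs_ext; intros; apply fs_ext; intros; auto. Qed.

Lemma DD_plus M f h : DD M (fun k l => f k l + h k l) = DD M f + DD M h.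
Proof. unfold DD. apply fs_fs_plus. Qed.

Lemma DD_minus M f h : DD M (fun k l => f k l - h k l) = DD M f - DD M h.
Proof.
  unfold DD. rewrite <- fs_minus. apply fs_ext; intros; apply fs_minus.
Qed.

Lemma DD_scal M c f : DD M (fun k l => c * f k l) = c * DD M f.
Proof. unfold DD. apply fs_fs_scal. Qed.

Lemma DD_fs M J (F : nat -> nat -> nat -> R) :
  DD M (fun k l => fs (fun j => F j k l) J) = fs (fun j => DD M (F j)) J.
Proof. unfold DD. apply fs_fs_fs. Qed.

Lemma DD_swap M f : DD M (fun k l => f l k) = DD M f.
Proof. unfold DD. rewrite fs_swap. auto. Qed.

Lemma DD_prod M c s t :
  DD M (fun k l => c * / ok k ^ s * / ok l ^ t) = c * (Lam M s * Lam M t).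
Proof.
  unfold DD, Lam. rewrite fs_mult, <- fs_scal.
  apply fs_ext; intros. rewrite <- fs_scal. apply fs_ext; intros. ring.
Qed.

Lemma DD_Q M c t s :
  DD M (fun k l => c * / (ok k + ok l) ^ s * / ok l ^ t) = c * Qs M t s.
Proof.
  rewrite <- DD_swap. unfold Qs. rewrite <- fs_fs_scal. unfold DD.
  apply fs_ext; intros; apply fs_ext; intros. unfold g. rewrite Rplus_comm. ring.
Qed.

Lemma FM a b M :
  let p := S (2 * a) in let q := S (2 * b) in
  Qs M (S p) (S q) =
  fs (fun j => (-1) ^ j * INR (bn (q + j) j) * (Lam M (S p - j) * Lam M (S q + j))) p
  + fs (fun i => INR (bn (p + i) i) * Qs M (S p + i) (S q - i)) q
  - INR (bn (p + q) q) * (/ 2 * fs (fun j => (-1) ^ j * (Lam M (j + 2) * Lam M (p + q - j))) (p + q - 1)).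
Proof.
  intros p q.
  transitivity (DD M (fun k l =>
    fs (fun j => (-1) ^ j * INR (bn (q + j) j) * / ok k ^ (S p - j) * / ok l ^ (S q + j)) p
  + fs (fun i => INR (bn (p + i) i) * / (ok k + ok l) ^ (S q - i) * / ok l ^ (S p + i)) q
  - INR (bn (p + q) q) * (/ ok k * / (ok k + ok l) * / ok l ^ (p + q)))).
  { unfold Qs, DD. apply fs_ext; intros k _; apply fs_ext; intros l _.
    unfold g. apply pf2; apply ok_pos. }
  rewrite DD_minus, DD_plus.
  rewrite (DD_scal M (INR (bn (p + q) q)) (fun k l => / ok k * / (ok k + ok l) * / ok l ^ (p + q))).
  rewrite !DD_fs.
  f_equal; [f_equal|f_equal].
  - apply fs_ext; intros j _. apply DD_prod.
  - apply fs_ext; intros i _. apply DD_Q.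
  -
    assert (E : DD M (fun k l => / ok k * / (ok k + ok l) * / ok l ^ (p + q)) =
      / 2 * (DD M (fun k l => / ok k * / (ok k + ok l) * / ok l ^ (p + q))
           + DD M (fun k l => / ok l * / (ok l + ok k) * / ok k ^ (p + q)))).
    { rewrite (DD_swap M (fun k l => / ok k * / (ok k + ok l) * / ok l ^ (p + q))). lra. }
    rewrite E. f_equal. rewrite <- DD_plus.
    transitivity (DD M (fun k l => fs (fun j => (-1) ^ j * / ok k ^ (j + 2) * / ok l ^ (p + q - j)) (p + q - 1))).
    + apply DD_ext; intros k l.
      pose proof (dsym (ok k) (ok l) (a + b) (ok_pos k) (ok_pos l)) as Hd. cbv zeta in Hd.
      replace (p + q)%nat with (S (S (2 * (a + b)))) by (unfold p, q; lia).
      replace (S (S (2 * (a + b))) - 1)%nat with (S (2 * (a + b))) by lia.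
      rewrite (Rplus_comm (ok l) (ok k)). rewrite Hd. reflexivity.
    + rewrite DD_fs. apply fs_ext; intros j _.
      rewrite <- DD_prod. apply DD_ext; intros; ring.
Qed.


Lemma geom2 u t n : (t - u) * fs (fun j => u ^ j * t ^ (n - j)) (S n) = t ^ S n - u ^ S n.
Proof.
  induction n.
  - simpl. ring.
  - rewrite fs_S. rewrite Nat.sub_diag.
    replace (fs (fun j => u ^ j * t ^ (S n - j)) (S n)) with (t * fs (fun j => u ^ j * t ^ (n - j)) (S n)).
    2:{ rewrite <- fs_scal. apply fs_ext; intros j Hj. rewrite Nat.sub_succ_l by lia. simpl. ring. }
    transitivity (t * ((t - u) * fs (fun j => u ^ j * t ^ (n - j)) (S n)) + (t - u) * (u ^ S n * t ^ 0)).
    + ring.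
    + rewrite IHn. simpl. ring.
Qed.

Lemma Epair x y n : 0 < x -> 0 < y -> x <> y ->
  fs (fun j => / x ^ (2 * j + 2) * / y ^ (2 * n + 2 - 2 * j)) (S n) =
  / y ^ (2 * n + 2) * / (x ^ 2 - y ^ 2) + / x ^ (2 * n + 2) * / (y ^ 2 - x ^ 2).
Proof.
  intros Hx Hy Hxy.
  set (u := / x ^ 2). set (t := / y ^ 2).
  assert (Hu : 0 < u) by (apply inv_pow_pos; lra).
  assert (Ht : 0 < t) by (apply inv_pow_pos; lra).
  assert (Hx2 : x ^ 2 <> y ^ 2).
  { intro H. apply Hxy. assert ((x - y) * (x + y) = 0) by (simpl in H; nra).
    apply Rmult_integral in H0. destruct H0; lra. }
  assert (Htu : t - u <> 0).
  { unfold t, u. intro H. apply Hx2.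
    assert (x ^ 2 <> 0) by (apply pow_nonzero; lra).
    assert (y ^ 2 <> 0) by (apply pow_nonzero; lra).
    rewrite <- (Rinv_inv (x ^ 2)), <- (Rinv_inv (y ^ 2)). f_equal. lra. }
  transitivity (u * t * fs (fun j => u ^ j * t ^ (n - j)) (S n)).
  - rewrite <- fs_scal. apply fs_ext; intros j Hj.
    unfold u, t. rewrite <- !pow_inv.
    rewrite <- !pow_mult.
    replace (2 * j + 2)%nat with (2 * (S j))%nat by lia.
    replace (2 * n + 2 - 2 * j)%nat with (2 * (S (n - j)))%nat by lia.
    rewrite !pow_mult. simpl. ring.
  - assert (E : fs (fun j => u ^ j * t ^ (n - j)) (S n) = (t ^ S n - u ^ S n) / (t - u)).
    { rewrite <- geom2. field; auto. }
    rewrite E.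
    replace (/ y ^ (2 * n + 2)) with (t ^ S n).
    2:{ unfold t. rewrite pow_inv, <- pow_mult. f_equal. f_equal. lia. }
    replace (/ x ^ (2 * n + 2)) with (u ^ S n).
    2:{ unfold u. rewrite pow_inv, <- pow_mult. f_equal. f_equal. lia. }
    replace (x ^ 2) with (/ u) by (unfold u; rewrite Rinv_inv; auto).
    replace (y ^ 2) with (/ t) by (unfold t; rewrite Rinv_inv; auto).
    field. repeat split; try lra.
Qed.

Lemma fs_const c n : fs (fun _ => c) n = INR n * c.
Proof. induction n; [simpl; ring|]. rewrite fs_S, IHn, S_INR. ring. Qed.

Lemma Ediag x n : 0 < x ->
  fs (fun j => / x ^ (2 * j + 2) * / x ^ (2 * n + 2 - 2 * j)) (S n) = (INR n + 1) * / x ^ (2 * n + 4).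
Proof.
  intros Hx.
  transitivity (fs (fun _ => / x ^ (2 * n + 4)) (S n)).
  - apply fs_ext; intros j Hj. rewrite <- Rinv_mult, <- pow_add. f_equal. f_equal. lia.
  - rewrite fs_const, S_INR. auto.
Qed.

Definition h (n : nat) : R := fs (fun j => / (2 * (INR j + 1))) n.

Lemma fs_rev f n : fs (fun k => f (n - 1 - k)%nat) n = fs f n.
Proof.
  induction n.
  - auto.
  - rewrite fs_shift. rewrite fs_S. rewrite <- IHn.
    replace (S n - 1 - 0)%nat with n by lia.
    rewrite Rplus_comm. f_equal. apply fs_ext; intros. f_equal. lia.
Qed.

Lemma fs_ind l M c : (l < M)%nat -> fs (fun k => if Nat.eq_dec k l then c else 0) M = c.
Proof.
  intros H. replace M with (l + 1 + (M - 1 - l))%nat by lia.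
  rewrite !fs_split. simpl.
  rewrite (fs_ext _ (fun _ => 0)). rewrite fs_zero.
  rewrite (fs_ext _ (fun _ => 0)). rewrite fs_zero.
  destruct (Nat.eq_dec (l + 0) l); [lra|lia].
  - intros k _. destruct (Nat.eq_dec (l + 1 + k) l); [lia|auto].
  - intros k Hk. destruct (Nat.eq_dec k l); [lia|auto].
Qed.

Lemma sumB l M : (l < M)%nat ->
  fs (fun k => if Nat.eq_dec k l then 0 else / (ok k - ok l)) M = h (M - 1 - l) - h l.
Proof.
  intros H. replace M with (l + 1 + (M - 1 - l))%nat at 1 by lia.
  rewrite !fs_split. simpl.
  destruct (Nat.eq_dec (l + 0) l); [|lia].
  replace (fs (fun k => if Nat.eq_dec k l then 0 else / (ok k - ok l)) l)
    with (fs (fun k => - / (2 * (INR (l - 1 - k) + 1))) l).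
  2:{ apply fs_ext; intros k Hk. destruct (Nat.eq_dec k l); [lia|].
      unfold ok. rewrite minus_INR by lia. rewrite minus_INR by lia. simpl.
      assert (INR k < INR l) by (apply lt_INR; lia).
      field. repeat split; lra. }
  rewrite (fs_rev (fun j => - / (2 * (INR j + 1)))).
  replace (fs (fun k => if Nat.eq_dec (l + 1 + k) l then 0 else / (ok (l + 1 + k) - ok l)) (M - 1 - l))
    with (h (M - 1 - l)).
  2:{ apply fs_ext; intros k Hk. destruct (Nat.eq_dec (l + 1 + k) l); [lia|].
      unfold ok. rewrite !plus_INR. simpl. field. pose proof (pos_INR k). lra. }
  unfold h. rewrite <- (Rmult_1_l (fs (fun j => / (2 * (INR j + 1))) l)).
  replace (fs (fun j => - / (2 * (INR j + 1))) l) with (-1 * fs (fun j => / (2 * (INR j + 1))) l).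
  2:{ rewrite <- fs_scal. apply fs_ext; intros. ring. }
  ring.
Qed.

Lemma sumP l M : fs (fun k => / (ok k + ok l)) M = h (l + M) - h l.
Proof.
  unfold h. rewrite fs_split.
  replace (fs (fun k => / (ok k + ok l)) M) with (fs (fun k => / (2 * (INR (l + k) + 1))) M).
  - ring.
  - apply fs_ext; intros. unfold ok. rewrite plus_INR. f_equal. ring.
Qed.


Definition Ap (n k l : nat) : R :=
  if Nat.eq_dec k l then (INR n + 1) / 2 * / ok k ^ (2 * n + 4)
  else / ok l ^ (2 * n + 2) * / (ok k ^ 2 - ok l ^ 2).

Definition err (n M : nat) : R :=
  fs (fun l => / ok l ^ (2 * n + 3) * (h (l + M) - h (M - 1 - l))) M.

Lemma ok_inj k l : k <> l -> ok k <> ok l.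
Proof. intros H E. unfold ok in E. apply H. apply INR_eq. lra. Qed.

Lemma Ap_row n l M : (l < M)%nat ->
  fs (fun k => Ap n k l) M =
  ((INR n + 1) / 2 + / 4) * / ok l ^ (2 * n + 4)
  + / 2 * / ok l ^ (2 * n + 3) * (h (M - 1 - l) - h (l + M)).
Proof.
  intros Hl. set (y := ok l). assert (Hy : 0 < y) by apply ok_pos.
  set (c0 := ((INR n + 1) / 2 + / 4) * / y ^ (2 * n + 4)).
  set (c1 := / y ^ (2 * n + 2) * / (2 * y)).
  transitivity (fs (fun k => (if Nat.eq_dec k l then c0 else 0)
     + c1 * ((if Nat.eq_dec k l then 0 else / (ok k - ok l)) - / (ok k + ok l))) M).
  - apply fs_ext; intros k Hk. unfold Ap.
    destruct (Nat.eq_dec k l) as [->|Hkl].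
    + fold y. unfold c0, c1. 
      assert (y ^ (2 * n + 2) <> 0) by (apply pow_nonzero; lra).
      replace (2 * n + 4)%nat with (2 + (2 * n + 2))%nat by lia. rewrite pow_add.
      set (Y := y ^ (2 * n + 2)) in *. change (y ^ 2) with (y * (y * 1)).
      field. split; auto; lra.
    + unfold c1. fold y. pose proof (ok_pos k). pose proof (ok_inj k l Hkl). fold y in H0.
      assert (y ^ (2 * n + 2) <> 0) by (apply pow_nonzero; lra).
      assert (ok k - y <> 0) by lra.
      assert (ok k ^ 2 - y ^ 2 <> 0).
      { simpl. intro E. assert ((ok k - y) * (ok k + y) = 0) by nra.
        apply Rmult_integral in H3. destruct H3; lra. }
      set (Y := y ^ (2 * n + 2)) in *. change (ok k ^ 2) with (ok k * (ok k * 1)) in *.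
      change (y ^ 2) with (y * (y * 1)) in *.
      field. repeat split; lra.
  - rewrite fs_plus, fs_ind by auto. rewrite fs_scal, fs_minus, sumB, sumP by auto.
    unfold c0, c1. fold y.
    replace (2 * n + 3)%nat with (S (2 * n + 2)) by lia.
    replace (2 * n + 4)%nat with (S (S (2 * n + 2))) by lia.
    assert (y ^ (2 * n + 2) <> 0) by (apply pow_nonzero; lra).
    set (Y := y ^ (2 * n + 2)) in *. change (y ^ S (S (2 * n + 2))) with (y * (y * Y)).
    change (y ^ S (2 * n + 2)) with (y * Y).
    field. split; lra.
Qed.

Lemma key_finite n M :
  fs (fun j => Lam M (2 * j + 2) * Lam M (2 * n + 2 - 2 * j)) (S n) =
  (INR n + 3 / 2) * Lam M (2 * n + 4) - err n M.
Proof.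
  transitivity (DD M (fun k l => fs (fun j => / ok k ^ (2 * j + 2) * / ok l ^ (2 * n + 2 - 2 * j)) (S n))).
  { rewrite DD_fs. apply fs_ext; intros j _. rewrite <- (Rmult_1_l (Lam M _ * _)).
    rewrite <- DD_prod. apply DD_ext; intros. ring. }
  transitivity (DD M (fun k l => Ap n k l + Ap n l k)).
  { apply DD_ext; intros k l. unfold Ap.
    destruct (Nat.eq_dec k l) as [Ekl|Hkl].
    - subst k. destruct (Nat.eq_dec l l) as [_|C]; [|lia]. rewrite Ediag by apply ok_pos. field. apply pow_nonzero; pose proof (ok_pos l); lra.
    - destruct (Nat.eq_dec l k); [lia|].
      rewrite Epair; auto using ok_pos, ok_inj. }
  rewrite DD_plus. rewrite (DD_swap M (Ap n)).
  unfold DD. rewrite (fs_swap (Ap n)).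
  transitivity (2 * fs (fun l => fs (fun k => Ap n k l) M) M); [ring|].
  rewrite (fs_ext _ (fun l => ((INR n + 1) / 2 + / 4) * / ok l ^ (2 * n + 4)
      + / 2 * / ok l ^ (2 * n + 3) * (h (M - 1 - l) - h (l + M)))).
  2:{ intros; apply Ap_row; auto. }
  rewrite fs_plus, fs_scal. unfold err, Lam.
  replace (fs (fun l => / 2 * / ok l ^ (2 * n + 3) * (h (M - 1 - l) - h (l + M))) M)
    with (- / 2 * fs (fun l => / ok l ^ (2 * n + 3) * (h (l + M) - h (M - 1 - l))) M).
  2:{ rewrite <- fs_scal. apply fs_ext; intros. ring. }
  field.
Qed.



Lemma h_diff a d : h (a + d) - h a <= INR d * / (2 * (INR a + 1)).
Proof.
  unfold h. rewrite fs_split.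
  assert (fs (fun k => / (2 * (INR (a + k) + 1))) d <= fs (fun _ => / (2 * (INR a + 1))) d).
  { apply fs_le; intros k _. apply Rinv_le_contravar.
    pose proof (pos_INR a); lra. rewrite plus_INR. pose proof (pos_INR k); lra. }
  rewrite fs_const in H. lra.
Qed.

Lemma h_mono a b : (a <= b)%nat -> h a <= h b.
Proof.
  intros H. unfold h. apply fs_mono; auto. intros. left. apply Rinv_0_lt_compat.
  pose proof (pos_INR k); lra.
Qed.

Lemma err_nonneg n M : 0 <= err n M.
Proof.
  unfold err. apply fs_nonneg. intros l.
  destruct (le_lt_dec (M - 1 - l) (l + M)).
  - apply Rmult_le_pos. left; apply inv_pow_pos, ok_pos.
    pose proof (h_mono _ _ l0). lra.
  - lia.
Qed.

Lemma term_bound x D : 1 <= x -> 2 <= D ->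
  / x ^ 2 * / D <= / (x + D) * / x ^ 2 + 2 * / (x + D) ^ 2.
Proof.
  intros Hx HD. set (N := x + D).
  assert (E : / x ^ 2 * / D = / N * / x ^ 2 + / N ^ 2 * / x + / N ^ 2 * / D).
  { unfold N. field. lra. }
  rewrite E.
  assert (0 < / N ^ 2) by (apply inv_pow_pos; unfold N; lra).
  assert (/ x <= 1). { rewrite <- Rinv_1. apply Rinv_le_contravar; lra. }
  assert (/ D <= 1). { rewrite <- Rinv_1. apply Rinv_le_contravar; lra. }
  assert (/ N ^ 2 * / x <= / N ^ 2) by (rewrite <- (Rmult_1_r (/ N ^ 2)) at 2; apply Rmult_le_compat_l; lra).
  assert (/ N ^ 2 * / D <= / N ^ 2) by (rewrite <- (Rmult_1_r (/ N ^ 2)) at 2; apply Rmult_le_compat_l; lra).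
  lra.
Qed.

Lemma err_bound n M : err n M <= 3 * / INR (S M).
Proof.
  unfold err.
  set (N := 2 * INR M + 1).
  assert (HM := pos_INR M).
  apply Rle_trans with (fs (fun l => / N * / ok l ^ 2 + 2 * / N ^ 2) M).
  - apply fs_le; intros l Hl.
    assert (Hlt : INR l < INR M) by (apply lt_INR; lia).
    assert (Hd : h (l + M) - h (M - 1 - l) <= ok l * / (2 * (INR M - INR l))).
    { pose proof (h_diff (M - 1 - l) (2 * l + 1)) as H.
      replace (M - 1 - l + (2 * l + 1))%nat with (l + M)%nat in H by lia.
      rewrite INR_odd in H. replace (INR (M - 1 - l) + 1) with (INR M - INR l) in H; auto.
      rewrite !minus_INR by lia. simpl. lra. }
    assert (Hok := ok_ge1 l).
    apply Rle_trans with (/ ok l ^ 2 * / (2 * (INR M - INR l))).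
    + apply Rle_trans with (/ ok l ^ (2 * n + 3) * (ok l * / (2 * (INR M - INR l)))).
      * apply Rmult_le_compat_l; auto. left; apply inv_pow_pos; lra.
      * replace (/ ok l ^ (2 * n + 3) * (ok l * / (2 * (INR M - INR l)))) with
          (/ ok l ^ (2 * n + 2) * / (2 * (INR M - INR l))).
        2:{ replace (2 * n + 3)%nat with (S (2 * n + 2)) by lia.
            assert (ok l ^ (2 * n + 2) <> 0) by (apply pow_nonzero; lra).
            change (ok l ^ S (2 * n + 2)) with (ok l * ok l ^ (2 * n + 2)). field. split; lra. }
        apply Rmult_le_compat_r. left; apply Rinv_0_lt_compat; lra.
        apply inv_ok_le. lia.
    + replace N with (ok l + 2 * (INR M - INR l)) by (unfold N, ok; ring).
      apply term_bound; auto.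
      assert (INR l + 1 <= INR M). { rewrite <- S_INR. apply le_INR. lia. }
      lra.
  - rewrite fs_plus, fs_scal, fs_const.
    change (fs (fun k => / ok k ^ 2) M) with (Lam M 2).
    pose proof (Lam_le2 M 2 (le_n 2)). pose proof (Lam_nonneg M 2).
    rewrite S_INR.
    assert (0 < / N) by (apply Rinv_0_lt_compat; unfold N; lra).
    assert (INR M * (2 * / N ^ 2) <= / N).
    { replace (INR M * (2 * / N ^ 2)) with ((2 * INR M / N) * / N) by (field; unfold N; lra).
      rewrite <- (Rmult_1_l (/ N)) at 2. apply Rmult_le_compat_r; [lra|].
      unfold Rdiv. apply Rmult_le_reg_r with N. unfold N; lra.
      rewrite Rmult_assoc, Rinv_l by (unfold N; lra). unfold N; lra. }
    assert (/ N <= / (INR M + 1)) by (apply Rinv_le_contravar; unfold N; lra).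
    nra.
Qed.

Lemma err_lim n : is_lim_seq (fun M => err n M) 0.
Proof.
  apply is_lim_seq_le_le with (fun _ => 0) (fun M => 3 * / INR (S M)).
  - intros M. split; [apply err_nonneg|apply err_bound].
  - apply is_lim_seq_const.
  - replace (Finite 0) with (Rbar_mult 3 0) by (simpl; f_equal; ring).
    apply is_lim_seq_scal_l.
    apply (is_lim_seq_incr_1 (fun M => / INR M)).
    replace (Finite 0) with (Rbar_inv p_infty) by auto.
    apply is_lim_seq_inv. apply is_lim_seq_INR. discriminate.
Qed.

Lemma key_lim n :
  fs (fun j => lambda_d (2 * j + 2) * lambda_d (2 * n + 2 - 2 * j)) (S n) =
  (INR n + 3 / 2) * lambda_d (2 * n + 4).
Proof.
  assert (H1 : is_lim_seq (fun M => fs (fun j => Lam M (2 * j + 2) * Lam M (2 * n + 2 - 2 * j)) (S n))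
     (fs (fun j => lambda_d (2 * j + 2) * lambda_d (2 * n + 2 - 2 * j)) (S n))).
  { apply (lim_fs (fun j M => Lam M (2 * j + 2) * Lam M (2 * n + 2 - 2 * j))).
    intros j Hj. apply is_lim_seq_mult'; apply lam_lim; lia. }
  assert (H2 : is_lim_seq (fun M => (INR n + 3 / 2) * Lam M (2 * n + 4) - err n M)
     ((INR n + 3 / 2) * lambda_d (2 * n + 4) - 0)).
  { apply is_lim_seq_minus'. 
    apply (is_lim_seq_scal_l _ (INR n + 3 / 2) (lambda_d (2 * n + 4))). apply lam_lim; lia.
    apply err_lim. }
  rewrite Rminus_0_r in H2.
  apply is_lim_seq_unique in H1. apply is_lim_seq_unique in H2.
  assert (Finite (fs (fun j => lambda_d (2 * j + 2) * lambda_d (2 * n + 2 - 2 * j)) (S n)) =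
          Finite ((INR n + 3 / 2) * lambda_d (2 * n + 4))).
  { rewrite <- H1, <- H2. apply Lim_seq_ext. intros. apply key_finite. }
  injection H; auto.
Qed.


Lemma lim_scal c (u : nat -> R) (l : R) : is_lim_seq u l -> is_lim_seq (fun n => c * u n) (c * l).
Proof. intros H. apply is_lim_seq_mult'; auto. apply is_lim_seq_const. Qed.

Lemma LI a b :
  let p := S (2 * a) in let q := S (2 * b) in
  0 = fs (fun j => (-1) ^ j * INR (bn (q + j) j) * (lambda_d (S p - j) * lambda_d (S q + j))) p
    + fs (fun i => INR (bn (p + S i) (S i)) * (sigma_st (S q - S i) (S p + S i) / 2 ^ (S q - S i))) (2 * b)
    - INR (bn (p + q) q) * (/ 2 * fs (fun j => (-1) ^ j * (lambda_d (j + 2) * lambda_d (p + q - j))) (p + q - 1)).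
Proof.
  intros p q.
  set (F := fun M => fs (fun j => (-1) ^ j * INR (bn (q + j) j) * (Lam M (S p - j) * Lam M (S q + j))) p
    + fs (fun i => INR (bn (p + S i) (S i)) * Qs M (S p + S i) (S q - S i)) (2 * b)
    - INR (bn (p + q) q) * (/ 2 * fs (fun j => (-1) ^ j * (Lam M (j + 2) * Lam M (p + q - j))) (p + q - 1))).
  assert (HF : forall M, F M = 0).
  { intros M. unfold F. pose proof (FM a b M) as H. cbv zeta in H.
    rewrite (fs_shift (fun i => INR (bn (S (2 * a) + i) i) * Qs M (S (S (2 * a)) + i) (S (S (2 * b)) - i)) (2 * b)) in H.
    rewrite !Nat.add_0_r, bn_0, Nat.sub_0_r in H. change (INR 1) with 1 in H.
    unfold p, q. lra. }
  assert (HL : is_lim_seq F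
    (fs (fun j => (-1) ^ j * INR (bn (q + j) j) * (lambda_d (S p - j) * lambda_d (S q + j))) p
    + fs (fun i => INR (bn (p + S i) (S i)) * (sigma_st (S q - S i) (S p + S i) / 2 ^ (S q - S i))) (2 * b)
    - INR (bn (p + q) q) * (/ 2 * fs (fun j => (-1) ^ j * (lambda_d (j + 2) * lambda_d (p + q - j))) (p + q - 1)))).
  { unfold F. apply is_lim_seq_minus'; [apply is_lim_seq_plus'|].
    - apply (lim_fs (fun j M => (-1) ^ j * INR (bn (q + j) j) * (Lam M (S p - j) * Lam M (S q + j)))).
      intros j Hj. apply lim_scal. apply is_lim_seq_mult'; apply lam_lim; unfold p, q in *; lia.
    - apply (lim_fs (fun i M => INR (bn (p + S i) (S i)) * Qs M (S p + S i) (S q - S i))).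
      intros i Hi. apply lim_scal. apply sig_lim; unfold p, q in *; lia.
    - apply lim_scal, lim_scal.
      apply (lim_fs (fun j M => (-1) ^ j * (Lam M (j + 2) * Lam M (p + q - j)))).
      intros j Hj. apply lim_scal. apply is_lim_seq_mult'; apply lam_lim; unfold p, q in *; lia. }
  apply is_lim_seq_unique in HL.
  rewrite (Lim_seq_ext F (fun _ => 0)) in HL by auto.
  rewrite Lim_seq_const in HL. injection HL; auto.
Qed.


Lemma alt_split f N :
  fs (fun j => (-1) ^ j * f j) (S (2 * N)) =
  fs (fun k => f (2 * k)%nat) (S N) - fs (fun k => f (2 * k + 1)%nat) N.
Proof.
  induction N.
  - simpl. ring.
  - replace (S (2 * S N)) with (S (S (S (2 * N)))) by lia.
    rewrite (fs_S _ (S (S (2 * N)))), (fs_S _ (S (2 * N))). rewrite IHN.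
    rewrite (fs_S (fun k => f (2 * k)%nat) (S N)), (fs_S (fun k => f (2 * k + 1)%nat) N).
    rewrite pow_1_odd. replace (S (S (2 * N))) with (2 * S N)%nat by lia.
    rewrite pow_1_even. replace (S (2 * N)) with (2 * N + 1)%nat by lia. ring.
Qed.

Lemma pRZ v : (1 <= v)%nat -> powerRZ 2 (Z.of_nat (2 * v)%nat - 3) = 2 ^ (2 * v - 1) / 4.
Proof.
  intros Hv.
  assert (E : powerRZ 2 (Z.of_nat (2 * v)%nat - 3) * powerRZ 2 2 = 2 ^ (2 * v - 1)).
  { rewrite <- powerRZ_add by lra. rewrite pow_powerRZ. f_equal. lia. }
  rewrite <- E. change (powerRZ 2 2) with (2 * (2 * 1)). field.
Qed.

Theorem mainTheorem12 (v r : nat) (hv : (1 <= v)%nat) (hr : (1 <= r)%nat) :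
  sum_n_m (fun i : nat => 
      2 ^ (i - 1)%nat * binom (2 * r + i - 1)%nat i * sigma_st (2 * v - i)%nat (2 * r + i)%nat)
    1 (2 * v - 2)%nat
  + 2 ^ (2 * v - 1)%nat *
    sum_n_m (fun j : nat =>
      (-1) ^ j * binom (2 * v + j - 1)%nat j * lambda_d (2 * v + j)%nat * lambda_d (2 * r - j)%nat)
    0 (2 * r - 2)%nat
  - powerRZ 2 (Z.of_nat (2 * v)%nat - 3) * binom (2 * v + 2 * r - 2)%nat (2 * v - 1)%nat
      * INR (2 * v + 2 * r - 1)%nat * lambda_d (2 * v + 2 * r)%nat
  + 2 ^ (2 * v - 2)%nat * binom (2 * v + 2 * r - 2)%nat (2 * v - 1)%nat *
    sum_n_m (fun j : nat =>
      lambda_d (2 * j + 1)%nat * lambda_d (2 * r + 2 * v - 2 * j - 1)%nat)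
    1 (r + v - 2)%nat
  = 0.
Proof.
  rewrite pRZ by auto.
  destruct r as [|a]; [lia|]. destruct v as [|b]; [lia|].
  pose proof (LI a b) as HLI. cbv zeta in HLI.
  pose proof (key_lim (a + b)) as HK.
  set (X := 2 ^ (2 * S b - 1)).
  set (Cc := INR (bn (S (2 * a) + S (2 * b)) (S (2 * b)))).
  set (L1 := fs (fun j => (-1) ^ j * INR (bn (S (2 * b) + j) j) *
        (lambda_d (S (S (2 * a)) - j) * lambda_d (S (S (2 * b)) + j))) (S (2 * a))) in *.
  set (L2 := fs (fun i => INR (bn (S (2 * a) + S i) (S i)) *
        (sigma_st (S (S (2 * b)) - S i) (S (S (2 * a)) + S i) / 2 ^ (S (S (2 * b)) - S i))) (2 * b)) in *.
  replace (S (2 * a) + S (2 * b) - 1)%nat with (S (2 * (a + b))) in HLI by lia.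
  rewrite alt_split in HLI.
  set (Od := fs (fun k => lambda_d (2 * k + 1 + 2) * lambda_d (S (2 * a) + S (2 * b) - (2 * k + 1))) (a + b)) in *.
  replace (fs (fun k => lambda_d (2 * k + 2) * lambda_d (S (2 * a) + S (2 * b) - 2 * k)) (S (a + b)))
    with ((INR (a + b) + 3 / 2) * lambda_d (2 * (a + b) + 4)) in HLI.
  2:{ rewrite <- HK. apply fs_ext; intros. f_equal. f_equal. lia. }
  assert (T1 : sum_n_m (fun i => 2 ^ (i - 1) * binom (2 * S a + i - 1) i * sigma_st (2 * S b - i) (2 * S a + i))
      1 (2 * S b - 2) = X * L2).
  { rewrite sum_n_m_fs. replace (S (2 * S b - 2) - 1)%nat with (2 * b)%nat by lia.
    unfold L2. rewrite <- fs_scal. apply fs_ext; intros k Hk.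
    unfold binom. rewrite C_bn by lia.
    replace (2 * S a + (1 + k) - 1)%nat with (S (2 * a) + S k)%nat by lia.
    replace (1 + k)%nat with (S k) by lia.
    replace (2 * S b - S k)%nat with (S (S (2 * b)) - S k)%nat by lia.
    replace (2 * S a + S k)%nat with (S (S (2 * a)) + S k)%nat by lia.
    unfold X. replace (2 * S b - 1)%nat with (S k - 1 + (S (S (2 * b)) - S k))%nat by lia.
    rewrite pow_add. assert (2 ^ (S (S (2 * b)) - S k) <> 0) by (apply pow_nonzero; lra).
    field; auto. }
  assert (T2 : sum_n_m (fun j => (-1) ^ j * binom (2 * S b + j - 1) j * lambda_d (2 * S b + j) * lambda_d (2 * S a - j))
      0 (2 * S a - 2) = L1).
  { rewrite sum_n_m_fs. replace (S (2 * S a - 2) - 0)%nat with (S (2 * a)) by lia.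
    unfold L1. apply fs_ext; intros j Hj. unfold binom. rewrite C_bn by lia.
    replace (0 + j)%nat with j by lia.
    replace (2 * S b + j - 1)%nat with (S (2 * b) + j)%nat by lia.
    replace (2 * S b + j)%nat with (S (S (2 * b)) + j)%nat by lia.
    replace (2 * S a - j)%nat with (S (S (2 * a)) - j)%nat by lia. ring. }
  assert (T4 : sum_n_m (fun j => lambda_d (2 * j + 1) * lambda_d (2 * S a + 2 * S b - 2 * j - 1)) 1 (S a + S b - 2)
      = Od).
  { rewrite sum_n_m_fs. replace (S (S a + S b - 2) - 1)%nat with (a + b)%nat by lia.
    unfold Od. apply fs_ext; intros k Hk. f_equal; f_equal; lia. }
  rewrite T1, T2, T4.
  assert (EC : binom (2 * S b + 2 * S a - 2) (2 * S b - 1) = Cc).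
  { unfold binom, Cc. rewrite C_bn by lia. f_equal. f_equal; lia. }
  rewrite EC.
  replace (INR (2 * S b + 2 * S a - 1)) with (2 * INR (a + b) + 3).
  2:{ replace (2 * S b + 2 * S a - 1)%nat with (2 * (a + b) + 3)%nat by lia.
      rewrite (plus_INR (2 * (a + b)) 3), (mult_INR 2 (a + b)). change (INR 2) with (1 + 1). change (INR 3) with (1 + 1 + 1). ring. }
  replace (2 * S b + 2 * S a)%nat with (2 * (a + b) + 4)%nat by lia.
  replace (2 ^ (2 * S b - 2)) with (X / 2).
  2:{ unfold X. replace (2 * S b - 1)%nat with (S (2 * S b - 2)) by lia. simpl. field. }
  fold X.
  fold Cc in HLI. replace L2 with (Cc * (/ 2 * ((INR (a + b) + 3 / 2) * lambda_d (2 * (a + b) + 4) - Od)) - L1) by lra.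
  field.
Qed.
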